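(* Let $G$ be a finite nested $p$-group with chain of centers $G=X_0>X_1>\dots>X_n\ge1$. If $p\in\mathrm{cd}(G)$, then $|G:X_1|=p^2$ and $|G':[X_1,G]|=p$.
   Context: $\mathrm{cd}(G)=\{\chi(1):\chi\in\mathrm{Irr}(G)\}$. For $\chi\in\mathrm{Irr}(G)$, $Z(\chi)=\{g\in G: |\chi(g)|=\chi(1)\}$. $G$ is nested if for all $\chi,\psi\in\mathrm{Irr}(G)$ either $Z(\chi)\le Z(\psi)$ or $Z(\psi)\le Z(\chi)$; then the distinct subgroups $Z(\chi)$ form a chain $G=X_0>X_1>\dots>X_n\ge1$, the chain of centers. *)

(* Defs.v *)
From HB Require Import structures.
From mathcomp Require Import all_boot all_order all_algebra all_fingroup all_solvable all_field all_character.
Set Implicit Arguments. Unset Strict Implicit. Unset Printing Implicit Defensive.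
Import GRing.Theory Num.Theory.
Local Open Scope ring_scope.

Definition in_cd (gT : finGroupType) (G : {group gT}) (d : algC) : Prop :=
  exists i : Iirr G, 'chi[G]_i 1%g = d.

(* G is nested: the centers Z(chi) of irreducible characters are totally
   ordered by inclusion.  'Z(chi)%CF is MathComp's cfcenter, which for a
   character chi is [set g in G | `|chi g| == chi 1]. *)
Definition nested (gT : finGroupType) (G : {group gT}) : Prop :=
  forall i j : Iirr G,
    ('Z('chi[G]_i)%CF \subset 'Z('chi[G]_j)%CF) \/
    ('Z('chi[G]_j)%CF \subset 'Z('chi[G]_i)%CF).

(* X is the second term X_1 of the chain of centers: X is a center Z(chi),
   X is proper in G, and every center properly contained in G lies in X. *)
Definition chain_X1 (gT : finGroupType) (G : {group gT}) (X : {set gT}) : Prop :=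
  [/\ exists i : Iirr G, 'Z('chi[G]_i)%CF = X,
      X \proper G &
      forall j : Iirr G, 'Z('chi[G]_j)%CF \proper G -> 'Z('chi[G]_j)%CF \subset X].

(* Main.v *)
Require Import Defs.
From HB Require Import structures.
From mathcomp Require Import all_boot all_order all_algebra all_fingroup all_solvable all_field all_character.
Import GRing.Theory Num.Theory.
Section L2sec.
Local Open Scope group_scope.

Lemma der1_small (T : finGroupType) (H Z : {group T}) p :
  prime p -> Z \subset 'Z(H) -> #|H : Z| = (p ^ 2)%N -> #|H^`(1)| <= p.
Proof.
move=> pr sZZ iHZ.
have p_gt1 := prime_gt1 pr.
have sZH : Z \subset H := subset_trans sZZ (center_sub H).
have cZH : Z \subset 'C(H) := subset_trans sZZ (subsetIr _ _).
have nsZH : Z <| H := sub_center_normal sZZ.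
have nZH : H \subset 'N(Z) := normal_norm nsZH.
have abHZ : abelian (H / Z).
  by apply: (card_p2group_abelian pr); rewrite card_quotient.
have sH'Z : H^`(1) \subset Z := der1_min nZH abHZ.
have /subsetPn[x Hx notZx] : ~~ (H \subset Z).
  by rewrite -indexg_eq1 iHZ; case: p pr p_gt1 {iHZ} => [|[|q]].
set M := (<[x]> <*> Z)%G.
have sxH : <[x]> \subset H by rewrite cycle_subG.
have sMH : M \subset H by rewrite join_subG sxH.
have sZM : Z \subset M by rewrite joing_subr.
have xM : x \in M by rewrite mem_gen // inE cycle_id.
have abM : abelian M.
  rewrite abelianY cycle_abelian (abelianS sZZ (center_abelian H)) /=.
  by rewrite centsC (subset_trans sxH) // centsC.
have iMZ : 1 < #|M : Z| by rewrite indexg_gt1; apply/subsetPn; exists x.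
have dHM : #|H : M| %| (p ^ 2)%N.
  by rewrite -iHZ -(Lagrange_index sMH sZM) dvdn_mulr.
  have [m m_le2 eHM] : exists2 m, m <= 2 & #|H : M| = (p ^ m)%N by exact: (elimT (dvdn_pfactor _ 2 pr) dHM).
have : m < 2.
  rewrite ltnNge; apply/negP => m2.
  have m_eq2 : m = 2 by apply/eqP; rewrite eqn_leq m_le2 m2.
  move: (Lagrange_index sMH sZM); rewrite iHZ eHM m_eq2 => /eqP.
  rewrite -{2}(muln1 (p ^ 2)%N) eqn_mul2l expn_eq0 (gtn_eqF (ltnW p_gt1)) /=.
  by move/eqP => e; rewrite e in iMZ.
case: m m_le2 eHM => [|[|//]] _ eHM _.
  have sHM : H \subset M by rewrite -indexg_eq1 eHM.
  have abH : abelian H := abelianS sHM abM.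
  by rewrite (derG1P abH) cards1 ltnW.
rewrite expn1 in eHM.
have /subsetPn[y Hy notMy] : ~~ (H \subset M) by rewrite -indexg_eq1 eHM (gtn_eqF p_gt1).
set XY := (<[x]> <*> <[y]>)%G.
have sXYH : XY \subset H by rewrite join_subG sxH cycle_subG.
set J := (XY <*> Z)%G.
have sJH : J \subset H by rewrite join_subG sXYH.
have sMJ : M \subset J.
  rewrite join_subG joing_subr andbT (subset_trans _ (joing_subl _ _)) //.
  exact: joing_subl.
have yJ : y \in J.
  by rewrite (subsetP (joing_subl _ _)) // mem_gen // inE cycle_id orbT.
have eHJ : H :=: J.
  apply/eqP; rewrite eqEsubset sJH andbT -indexg_eq1.
  have iJM : 1 < #|J : M| by rewrite indexg_gt1; apply/subsetPn; exists y.
  move: (Lagrange_index sJH sMJ); rewrite eHM => e.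
  have : #|H : J| %| p by rewrite -e dvdn_mulr.
  case/(dvdn_pfactor _ 1 pr) => [[|[|//]]] _ e2; first by rewrite e2.
  move: e; rewrite e2 expn1 => /eqP; rewrite -{2}(muln1 p) eqn_mul2l (gtn_eqF (prime_gt0 pr)) /= => /eqP e3.
  by rewrite e3 in iJM.
have cXYZ : Z \subset 'C(XY) by rewrite centsC (subset_trans sXYH) // centsC.
have defH : XY \* Z = H by rewrite cprodEY // eHJ.
have H'E : H^`(1) = XY^`(1).
  have := der_cprod 1 defH.
  by rewrite (derG1P (abelianS sZZ (center_abelian H))) cprodg1 => ->.
have cxy_Z : [~ x, y] \in Z.
  by apply: (subsetP sH'Z); rewrite mem_commg.
have cxyC : [~ x, y] \in 'C(XY) by apply: (subsetP cXYZ).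
rewrite H'E der1_joing_cycles // -orderE.
have nMH : H \subset 'N(M).
  apply: normal_norm; apply: sub_der1_normal => //.
  exact: subset_trans sH'Z sZM.
have ypM : y ^+ p \in M.
  have yN : y \in 'N(M) := subsetP nMH y Hy.
  apply: coset_idr; first by rewrite groupX.
  rewrite morphX //= -eHM -card_quotient //.
  by rewrite expg_cardG // mem_quotient.
have cyc : commute y [~ x, y].
  have : [~ x, y] \in 'C(H) by apply: (subsetP cZH).
  by move/centP => c; apply/esym/c.
apply: dvdn_leq; first exact: prime_gt0.
rewrite order_dvdn -commgX //.
apply/commgP.
by apply: (centsP abM).
Qed.

End L2sec.

Section Helpers.
Local Open Scope ring_scope.

Lemma pnat_ge_p p k : prime p -> p.-nat k -> (1 < k)%N -> (p <= k)%N.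
Proof.
move=> pr pk k1.
have pdk : pdiv k \in \pi(k) by rewrite mem_primes pdiv_prime // ltnW // pdiv_dvd.
have /eqnP ep := pnatPpi pk pdk.
by apply: dvdn_leq; [exact: ltnW | rewrite -ep pdiv_dvd].
Qed.

Lemma irr1_natP (gT : finGroupType) (G : {group gT}) (i : Iirr G) :
  exists d, [/\ 'chi[G]_i 1%g = d%:R, (d %| #|G|)%N & (0 < d)%N].
Proof.
exists (irr_degree (socle_of_Iirr i)).
have e := irr1_degree i.
split=> //; first by have := dvd_irr1_cardG i; rewrite e dvdC_nat.
by rewrite -(ltr_nat algC) -e irr1_gt0.
Qed.

Lemma lin_irr1E (gT : finGroupType) (G : {group gT}) (i : Iirr G) :
  ('chi[G]_i \is a linear_char) = ('chi_i 1%g == 1).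
Proof. by rewrite qualifE /= irr_char. Qed.

Lemma irr1_pdeg (gT : finGroupType) (G : {group gT}) (i : Iirr G) p :
  prime p -> (p.-group G)%g -> ~~ ('chi[G]_i \is a linear_char) ->
  exists d, [/\ 'chi[G]_i 1%g = d%:R, p.-nat d & (p <= d)%N].
Proof.
move=> pr pG nl; have [d [e dG d0]] := irr1_natP _ _ i.
have pd : p.-nat d := pnat_dvd dG pG.
exists d; split=> //; apply: pnat_ge_p => //.
rewrite ltn_neqAle d0 andbT eq_sym; apply: contraNneq nl => d1.
by rewrite lin_irr1E e d1.
Qed.

End Helpers.

Section Cliff.
Local Open Scope ring_scope.

Lemma clifford_step (gT : finGroupType) (G : {group gT}) p (i : Iirr G) :
  prime p -> (p.-group G)%g -> 'chi[G]_i 1%g = p%:R ->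
  exists T : {group gT},
    [/\ (T \subset G)%g, #|G : T|%g = p & (T^`(1) \subset cfker 'chi_i)%g].
Proof.
move=> pr pG chi1.
have p_gt1 := prime_gt1 pr.
pose Z := ('Z('chi_i))%CF.
have nGZ : ~~ (G \subset Z)%g.
  apply/negP => sGZ.
  have := (irr1_bound i).1.
  have -> : #|G : Z|%g = 1%N by apply/eqP; rewrite indexg_eq1.
  rewrite chi1 -natrX ler_nat leqNgt => /negP; apply.
  by rewrite expnS expn1 (leq_trans p_gt1) // leq_pmulr // ltnW.
pose gP := [pred A : {group gT} | (A <| G)%g && ~~ (A \subset Z)%g].
have gPG : gP G by rewrite /= normal_refl nGZ.
have [A minA sAG] := mingroup_exists gPG.
case/mingroupP: minA => /andP[nsAG nAZ] minA.
have pA := pgroupS sAG pG.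
set a := logn p #|A|.
have cardA : #|A| = (p ^ a)%N := card_pgroup pA.
have a_gt0 : (0 < a)%N.
  rewrite lt0n; apply: contraNneq nAZ => a0.
  have : #|A| = 1%N by rewrite cardA a0.
  by move/card1_trivg => ->; rewrite sub1G.
have [B [sBA nsBG cardB]] := normal_pgroup pG nsAG (leq_pred a).
have sBZ : (B \subset Z)%g.
  apply: contraR nAZ => nBZ.
  have eBA : (B :=: A)%g by apply: minA; rewrite // /= nsBG.
  move: cardB; rewrite eBA cardA => /eqP.
  by rewrite eqn_exp2l // eq_sym ltn_eqF // ltn_predL.
have iAB : #|A : B|%g = p.
  have := Lagrange sBA; rewrite cardB cardA -{2}(prednK a_gt0) expnS mulnC.
  by move/eqP; rewrite eqn_pmul2r ?expn_gt0 ?prime_gt0 // => /eqP.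
have [j sj] := constt_cfRes_irr A i.
pose T := ('I_G['chi_j])%G.
have sTG : (T \subset G)%g := Inertia_sub G 'chi_j.
have nsAG' := nsAG.
have nGT : ~~ (G \subset T)%g.
  apply/negP => sGT.
  have sGI : (G \subset 'I['chi_j])%g := subset_trans sGT (subsetIr _ _).
  have eRes := Clifford_Res_sum_cfclass nsAG sj.
  rewrite cfclass_invariant // big_seq1 in eRes.
  set c := '['Res[A] 'chi_i, 'chi_j] in eRes.
  have c_gt0 : 0 < c.
    by rewrite natr_gt0 ?Cnat_cfdot_char_irr ?cfRes_char ?irr_char // -irr_consttE.
  have cnz : c != 0 := lt0r_neq0 c_gt0.
  have chiA x : (x \in A)%g -> 'chi_i x = c * 'chi_j x.
    move=> Ax; rewrite -(cfResE _ sAG Ax) eRes cfunE //.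
  have chiA1 : 'chi_i 1%g = c * 'chi_j 1%g by rewrite chiA.
  have sBZj : (B \subset 'Z('chi_j)%CF)%g.
    apply/subsetP => b Bb; have Ab := subsetP sBA b Bb.
    have Zb := subsetP sBZ b Bb.
    rewrite irr_cfcenterE ?(subsetP sAG) // in Zb.
    rewrite irr_cfcenterE //.
    by rewrite chiA // chiA1 normrM (gtr0_norm c_gt0) (inj_eq (mulfI cnz)) in Zb.
  have [d [ed dA d0]] := irr1_natP _ _ j.
  have d1 : d = 1%N.
    apply/eqP; rewrite eqn_leq d0 andbT leqNgt; apply/negP => d_gt1.
    have pd : (p <= d)%N := @pnat_ge_p p d pr (pnat_dvd dA pA) d_gt1.
    have := (irr1_bound j).1; rewrite ed -natrX ler_nat => hb.
    have hb2 : (#|A : 'Z('chi_j)%CF|%g <= p)%N.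
      by rewrite -iAB dvdn_leq ?indexg_gt0 ?prime_gt0 -?iAB ?indexgS.
    have := leq_trans hb hb2; rewrite leqNgt => /negP; apply.
    apply: (leq_trans (ltn_Pmull p_gt1 (prime_gt0 pr))).
    by rewrite expnS expn1 leq_mul.
  have linj : 'chi_j \is a linear_char by rewrite lin_irr1E ed d1.
  apply/negP: nAZ; rewrite negbK; apply/subsetP => x Ax.
  rewrite /Z irr_cfcenterE ?(subsetP sAG) // chiA // chiA1 lin_char1 //.
  by rewrite normrM (normC_lin_char linj) // (gtr0_norm c_gt0) mulr1.
have [bijA _ bijB _ _] := constt_Inertia_bijection j nsAG.
have iB : i \in irr_constt ('Ind[G] 'chi_j) by rewrite constt_Ind_Res.
rewrite -bijB in iB.
case/imsetP: iB => s sA Ei.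
have chiE : 'chi_i = 'Ind[G] 'chi_s by rewrite Ei /Ind_Iirr cfIirrE // bijA.
rewrite chiE cfInd1 // in chi1.
have [ds [es _ ds0]] := irr1_natP _ _ s.
move: chi1; rewrite es -natrM => /eqP; rewrite eqr_nat => /eqP e.
have iGT : #|G : T|%g = p.
  apply/(prime_nt_dvdP pr); first by rewrite indexg_eq1.
  by rewrite -e dvdn_mulr.
have ds1 : ds = 1%N.
  by move/eqP: e; rewrite iGT -{2}(muln1 p) eqn_mul2l (gtn_eqF (prime_gt0 pr)) => /eqP.
have lins : 'chi_s \is a linear_char by rewrite lin_irr1E es ds1.
have nsTG : (T <| G)%g.
  by apply: (p_maximal_normal pG); apply: p_index_maximal => //; rewrite iGT.
exists T; split=> //.
rewrite chiE cfker_Ind ?irr_char ?irr_neq0 //.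
rewrite sub_gcore; first by rewrite -lin_irr_der1.
exact: char_norm_trans (der_char 1 T) (normal_norm nsTG).
Qed.

End Cliff.

Section Upper.
Local Open Scope group_scope.

Lemma upper_bound (gT : finGroupType) (G X1 : {group gT}) p (i0 : Iirr G) :
  prime p -> p.-group G -> chain_X1 G X1 -> (('chi[G]_i0)%R 1%g = p%:R)%R ->
  (#|G : X1| <= p ^ 2)%N.
Proof.
move=> pr pG [_ prX1 maxX1] chi1.
have p_gt1 := prime_gt1 pr.
have [T [sTG iGT sT'K]] := @clifford_step gT G p i0 pr pG chi1.
set K := cfker ('chi_i0)%R in sT'K.
have nsKG : K <| G := cfker_normal _.
have nKG := normal_norm nsKG.
have nlchi : ~~ (('chi_i0)%R \is a linear_char).
  by rewrite lin_irr1E chi1 pnatr_eq1 (gtn_eqF p_gt1).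
have nG'K : ~~ (G^`(1) \subset K) by rewrite -lin_irr_der1.
set R := [~: G^`(1), G].
have sRG' : R \subset G^`(1) by rewrite commg_subl der_norm.
have nsRG : R <| G.
  by rewrite /normal (subset_trans sRG' (der_sub 1 G)) commg_normr.
pose L := (K <*> R)%G.
have nsLG : L <| G := normalY nsKG nsRG.
have nLG := normal_norm nsLG.
have sKL : K \subset L := joing_subl _ _.
have sRL : R \subset L := joing_subr _ _.
have nG'L : ~~ (G^`(1) \subset L).
  apply/negP => sG'L.
  have nilG : nilpotent (G / K) := pgroup_nil (quotient_pgroup K pG).
  have nG'Kq : G^`(1) \subset 'N(K) := subset_trans (der_sub 1 G) nKG.
  have eq1 : (G / K)^`(1) = G^`(1) / K by rewrite quotient_der.
  have sub1 : (G / K)^`(1) \subset [~: (G / K)^`(1), G / K].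
    rewrite eq1 -quotientR //.
    have : G^`(1) / K \subset L / K by apply: quotientS.
    by rewrite /L quotientYidl // (subset_trans (normal_sub nsRG)).
  have : (G / K)^`(1) == 1.
    apply/negPn/negP => nt.
    have := nil_comm_properl nilG (der_sub 1 _) nt (A := G / K).
    rewrite subsetI subxx der_norm => /(_ isT).
    by rewrite /proper sub1 andbF.
  rewrite eq1 -subG1 quotient_sub1 //.
  by apply/negP.
have [i1 nl1] : exists i1 : Iirr (G / L), ~~ (('chi_i1)%R \is a linear_char)%R.
  apply/existsP; rewrite -negb_forall; apply/negP => /forallP allLin.
  have abGL : abelian (G / L) by apply/char_abelianP.
  move: nG'L; rewrite -quotient_sub1 ?(subset_trans (der_sub 1 G)) //.
  by rewrite quotient_der // (derG1P abGL) subxx.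
set k := mod_Iirr i1.
have thE : ('chi_k)%R = (('chi_i1)%R %% L)%CF := mod_IirrE i1 nsLG.
have nlth : ~~ (('chi_k)%R \is a linear_char) by rewrite thE cfMod_lin_charE.
have sLkth : L \subset cfker ('chi_k)%R by rewrite thE cfker_mod.
have [l sl] := constt_cfRes_irr T k.
have linl : ('chi_l)%R \is a linear_char.
  rewrite lin_irr_der1; apply: subset_trans (cfker_constt _ sl); last first.
    by rewrite cfRes_char ?irr_char.
  rewrite cfker_Res ?irr_char // subsetI der_sub /=.
  exact: subset_trans sT'K (subset_trans sKL sLkth).
have kInd : k \in irr_constt ('Ind[G] 'chi_l)%R by rewrite constt_Ind_Res.
have th1le := char1_ge_constt (cfInd_char G (irr_char l)) kInd.
rewrite cfInd1 // (lin_char1 linl) in th1le. rewrite mulr1 iGT in th1le.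
have [d [ed pd pled]] := @irr1_pdeg _ G k p pr pG nlth.
rewrite ed ler_nat in th1le.
have dp : d = p by apply/eqP; rewrite eqn_leq th1le pled.
set Kt := cfker ('chi_k)%R.
have nsKtG : Kt <| G := cfker_normal _.
have nKtG := normal_norm nsKtG.
have nG'Kt : G^`(1) \subset 'N(Kt) := subset_trans (der_sub 1 G) nKtG.
have sG'Z : G^`(1) \subset 'Z(('chi_k)%R)%CF.
  have sKtZ : Kt \subset 'Z(('chi_k)%R)%CF := normal_sub (cfker_center_normal _).
  rewrite -(quotientSGK nG'Kt sKtZ) cfcenter_eq_center subsetI.
  rewrite quotientS ?der_sub //= quotient_cents2 //.
  exact: subset_trans sRL (subset_trans sLkth (subxx _)).
have abZ : abelian (G / 'Z(('chi_k)%R)%CF) := sub_der1_abelian sG'Z.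
have eZ := irr1_abelian_bound abZ.
rewrite ed dp -natrX in eZ; move/eqP: eZ; rewrite eqr_nat => /eqP eZ.
have prZ : 'Z(('chi_k)%R)%CF \proper G.
  rewrite /proper cfcenter_sub /= -indexg_eq1 -eZ.
  by rewrite (gtn_eqF (ltn_trans p_gt1 (ltn_Pmull p_gt1 (prime_gt0 pr)))) ?expnS ?expn1.
have sZX := maxX1 k prZ.
rewrite eZ; apply: dvdn_leq; first exact: indexg_gt0.
exact: indexgS.
Qed.

End Upper.

Theorem mainTheorem18 (gT : finGroupType) (G X1 : {group gT}) (p : nat) :
  prime p -> (p.-group G)%g -> nested G -> chain_X1 G X1 ->
  in_cd G (p%:R : algC)%R ->
  (#|G : X1|%g = (p ^ 2)%N) /\ (#|(G^`(1))%g : [~: X1, G]%g|%g = p).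
Proof.
move=> pr pG _ cX1 [i0 chi1].
have p_gt1 := prime_gt1 pr.
have upper := @upper_bound gT G X1 p i0 pr pG cX1 chi1.
case: cX1 => [[j0 eX1] prX1 _].
have sX1G := proper_sub prX1.
have nlpsi : ~~ ('chi_j0 \is a linear_char)%R.
  apply/negP => lin; move/andP: prX1 => [_]; apply/negP; apply/negPn.
  rewrite -eX1; apply/subsetP => x Gx.
  by rewrite irr_cfcenterE // (normC_lin_char lin) // (lin_char1 lin).
have [d [ed pd pled]] := @irr1_pdeg _ G j0 p pr pG nlpsi.
have lower : (p ^ 2 <= #|G : X1|%g)%N.
  have := (irr1_bound j0).1; rewrite ed eX1 -natrX ler_nat => h.
  apply: leq_trans h; by rewrite !expnS !expn0 !muln1 leq_mul.
have iX1 : #|G : X1|%g = (p ^ 2)%N by apply/eqP; rewrite eqn_leq upper lower.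
split => //.
set N := [~: X1, G]%g.
have nX1G : (G \subset 'N(X1))%g by rewrite -eX1 normal_norm ?cfcenter_normal.
have sNX1 : (N \subset X1)%g by rewrite commg_subl.
have nsNG : (N <| G)%g by rewrite /normal (subset_trans sNX1 sX1G) commg_normr.
have nNG := normal_norm nsNG.
have nKpG := normal_norm (cfker_normal ('chi_j0)%R).
have sNKp : (N \subset cfker ('chi_j0)%R)%g.
  rewrite -quotient_cents2 ?(subset_trans sX1G nKpG) //.
  rewrite -eX1; apply: subset_trans (cfcenter_subset_center _) _.
  exact: subsetIr.
have nG'N : ~~ (G^`(1) \subset N)%g.
  apply: contra nlpsi => h; rewrite lin_irr_der1 (subset_trans h sNKp) //.
have nG'N' : (G^`(1) \subset 'N(N))%g := subset_trans (der_sub 1 G) nNG.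
have iq : #|(G^`(1))%g : N|%g = #|((G / N)^`(1))%g|.
  by rewrite -card_quotient // quotient_der.
have sZ : ((X1 / N)%g \subset 'Z(G / N))%g.
  rewrite subsetI quotientS //= quotient_cents2 ?(subset_trans sX1G nNG) //.
have idx : #|(G / N)%G : (X1 / N)%G|%g = (p ^ 2)%N.
  by rewrite index_quotient_eq // subIset // sNX1 orbT.
have le := @der1_small _ (G / N)%G (X1 / N)%G p pr sZ idx.
have gt1 : (1 < #|(G^`(1))%g : N|%g)%N by rewrite indexg_gt1.
have pn : p.-nat #|(G^`(1))%g : N|%g.
  exact: pnat_dvd (dvdn_indexg _ _) (pgroupS (der_sub 1 G) pG).
have ge := @pnat_ge_p p _ pr pn gt1.
by apply/eqP; rewrite eqn_leq ge iq le.
Qed.
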